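(* Let $n\ge 1$, let $a_1,\dots,a_n>0$ and $p_1,\dots,p_n>0$ be real numbers, and let $0<r\leq s$. Define $$M_r(a,p)=\left(\frac{\sum_{i=1}^n p_i a_i^r}{\sum_{i=1}^n p_i}\right)^{1/r},\qquad M_s(a,p)=\left(\frac{\sum_{i=1}^n p_i a_i^s}{\sum_{i=1}^n p_i}\right)^{1/s},$$ $$A=\frac{r(s-r)}{2s^2}[M_s(a,p)]^r\cdot\frac{\sum_{i=1}^n p_i\left(\frac{a_i^s}{[M_s(a,p)]^s}-1\right)^2}{\sum_{i=1}^n p_i},$$ $$m=\min\left\{1,\ \frac{a_1^s}{[M_s(a,p)]^s},\dots,\frac{a_n^s}{[M_s(a,p)]^s}\right\},\qquad M=\max\left\{1,\ \frac{a_1^s}{[M_s(a,p)]^s},\dots,\frac{a_n^s}{[M_s(a,p)]^s}\right\}.$$ Then $$\frac{A}{M}\leq[M_s(a,p)]^r-[M_r(a,p)]^r\leq\frac{A}{m}.$$ *)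

(* Defs.v *)
From Stdlib Require Export Reals.
Open Scope R_scope.

(* sumR n f = f 0 + ... + f (n-1)  (indices 0..n-1 stand for 1..n) *)
Fixpoint sumR (n : nat) (f : nat -> R) : R :=
  match n with
  | O => 0
  | S k => sumR k f + f k
  end.

Fixpoint minR1 (n : nat) (f : nat -> R) : R :=
  match n with
  | O => 1
  | S k => Rmin (minR1 k f) (f k)
  end.

Fixpoint maxR1 (n : nat) (f : nat -> R) : R :=
  match n with
  | O => 1
  | S k => Rmax (maxR1 k f) (f k)
  end.

Definition powMean (n : nat) (a p : nat -> R) (r : R) : R :=
  Rpower (sumR n (fun i => p i * Rpower (a i) r) / sumR n p) (1 / r).

Definition A_const (n : nat) (a p : nat -> R) (r s : R) : R :=
  r * (s - r) / (2 * s ^ 2) * Rpower (powMean n a p s) r *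
  (sumR n (fun i => p i * (Rpower (a i) s / Rpower (powMean n a p s) s - 1) ^ 2)
   / sumR n p).

Definition m_const (n : nat) (a p : nat -> R) (s : R) : R :=
  minR1 n (fun i => Rpower (a i) s / Rpower (powMean n a p s) s).

Definition M_const (n : nat) (a p : nat -> R) (s : R) : R :=
  maxR1 n (fun i => Rpower (a i) s / Rpower (powMean n a p s) s).

(* Main.v *)
Require Import Defs.
From Stdlib Require Import Reals Lra Lia.
From Coquelicot Require Import Coquelicot.
Open Scope R_scope.
Lemma sumR_pos n f : (1 <= n)%nat -> (forall i, (i < n)%nat -> 0 < f i) -> 0 < sumR n f.
Proof. induction n as [|k IH]; intros Hn Hf; [lia|]. simpl.
 destruct k as [|k'].
 - simpl. specialize (Hf 0%nat ltac:(lia)). lra.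
 - assert (0 < sumR (S k') f) by (apply IH; [lia| intros; apply Hf; lia]).
   specialize (Hf (S k') ltac:(lia)). lra. Qed.

Lemma sumR_le n f g : (forall i, (i < n)%nat -> f i <= g i) -> sumR n f <= sumR n g.
Proof. induction n as [|k IH]; intros H; simpl; [lra|].
 assert (sumR k f <= sumR k g) by (apply IH; intros; apply H; lia).
 specialize (H k ltac:(lia)). lra. Qed.

Lemma sumR_ext n f g : (forall i, (i < n)%nat -> f i = g i) -> sumR n f = sumR n g.
Proof. induction n as [|k IH]; intros H; simpl; [lra|].
 rewrite IH by (intros; apply H; lia). rewrite H by lia. reflexivity. Qed.

Lemma sumR_scal n k f : sumR n (fun i => k * f i) = k * sumR n f.
Proof. induction n as [|j IH]; simpl; [ring|]. rewrite IH; ring. Qed.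

Lemma sumR_lin n p x y t : sumR n (fun i => p i * (1 + t * (x i - 1) - y i)) =
  sumR n p + t * (sumR n (fun i => p i * x i) - sumR n p) - sumR n (fun i => p i * y i).
Proof. induction n as [|j IH]; simpl; [ring|]. rewrite IH; ring. Qed.

Lemma minR1_le1 n f : minR1 n f <= 1.
Proof. induction n; simpl; [lra|]. pose proof (Rmin_l (minR1 n f) (f n)). lra. Qed.
Lemma minR1_le n f i : (i < n)%nat -> minR1 n f <= f i.
Proof. induction n as [|k IH]; intros Hi; [lia|]. simpl.
 destruct (Nat.eq_dec i k) as [->|Hne]; [apply Rmin_r|].
 pose proof (Rmin_l (minR1 k f) (f k)). pose proof (IH ltac:(lia)). lra. Qed.
Lemma minR1_pos n f : (forall i, (i < n)%nat -> 0 < f i) -> 0 < minR1 n f.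
Proof. induction n as [|k IH]; intros H; simpl; [lra|].
 apply Rmin_glb_lt; [apply IH; intros; apply H; lia| apply H; lia]. Qed.
Lemma maxR1_ge1 n f : 1 <= maxR1 n f.
Proof. induction n; simpl; [lra|]. pose proof (Rmax_l (maxR1 n f) (f n)). lra. Qed.
Lemma maxR1_ge n f i : (i < n)%nat -> f i <= maxR1 n f.
Proof. induction n as [|k IH]; intros Hi; [lia|]. simpl.
 destruct (Nat.eq_dec i k) as [->|Hne]; [apply Rmax_r|].
 pose proof (Rmax_l (maxR1 k f) (f k)). pose proof (IH ltac:(lia)). lra. Qed.
Lemma exp_mono a b : a <= b -> exp a <= exp b.
Proof. intros H; destruct (Req_dec a b) as [->|H']; [lra|].
 left; apply exp_increasing; lra. Qed.

Lemma mvt_le (f df : R -> R) a b : a <= b ->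
  (forall y, a <= y <= b -> is_derive f y (df y)) ->
  (forall y, a <= y <= b -> 0 <= df y) -> f a <= f b.
Proof.
intros Hab Hd Hp. destruct (Req_dec a b) as [->|Hne]; [lra|].
destruct (MVT_gen f a b df) as [c [Hc Heq]].
- intros x Hx. apply Hd. rewrite Rmin_left, Rmax_right in Hx; lra.
- intros x Hx. rewrite Rmin_left, Rmax_right in Hx by lra.
  apply continuity_pt_filterlim. apply (ex_derive_continuous f x).
  eexists; apply Hd; lra.
- rewrite Rmin_left, Rmax_right in Hc by lra.
  assert (0 <= df c) by (apply Hp; lra). nra.
Qed.

Lemma G1 (F DF D2 : R -> R) x : 0 < x <= 1 -> F 1 = 0 -> DF 1 = 0 ->
  (forall y, x <= y <= 1 -> is_derive F y (DF y)) ->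
  (forall y, x <= y <= 1 -> is_derive DF y (D2 y)) ->
  (forall y, x <= y <= 1 -> 0 <= D2 y) -> 0 <= F x.
Proof.
intros Hx H1 H2 HF HD HD2.
assert (Hneg : forall y, x <= y <= 1 -> DF y <= 0).
{ intros y Hy. rewrite <- H2. apply (mvt_le DF D2 y 1); try lra.
  - intros z Hz; apply HD; lra.
  - intros z Hz; apply HD2; lra. }
assert (- F x <= - F 1).
{ apply (mvt_le (fun y => - F y) (fun y => - DF y) x 1); try lra.
  - intros y Hy. apply (is_derive_opp F y (DF y)). apply HF; lra.
  - intros y Hy. specialize (Hneg y Hy). lra. }
lra.
Qed.

Lemma G2 (F DF D2 : R -> R) x : 1 <= x -> F 1 = 0 -> DF 1 = 0 ->
  (forall y, 1 <= y <= x -> is_derive F y (DF y)) ->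
  (forall y, 1 <= y <= x -> is_derive DF y (D2 y)) ->
  (forall y, 1 <= y <= x -> 0 <= D2 y) -> 0 <= F x.
Proof.
intros Hx H1 H2 HF HD HD2.
assert (Hpos : forall y, 1 <= y <= x -> 0 <= DF y).
{ intros y Hy. rewrite <- H2. apply (mvt_le DF D2 1 y); try lra.
  - intros z Hz; apply HD; lra.
  - intros z Hz; apply HD2; lra. }
rewrite <- H1. apply (mvt_le F DF 1 x); auto.
Qed.

Lemma E_ge t y : 0 <= t <= 1 -> 0 < y <= 1 -> y <= exp (t * ln y).
Proof. intros Ht Hy. assert (ln y <= 0) by (rewrite <- ln_1; apply ln_le; lra).
 rewrite <- (exp_ln y) at 1 by lra. apply exp_mono. nra. Qed.

Lemma E_le t y : 0 <= t <= 1 -> 1 <= y -> exp (t * ln y) <= y.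
Proof. intros Ht Hy. assert (0 <= ln y) by (rewrite <- ln_1; apply ln_le; lra).
 rewrite <- (exp_ln y) at 2 by lra. apply exp_mono. nra. Qed.

Section T.
Variable t : R.
Hypothesis Ht : 0 <= t <= 1.
Let c := t * (1 - t) / 2.
Let E y := exp (t * ln y).

Definition phi y := c * (1 - y) ^ 2 - y - t * y * (y - 1) + y * exp (t * ln y).
Definition dphi y := - 2 * c * (1 - y) - 1 - t * (2 * y - 1) + (1 + t) * exp (t * ln y).
Definition d2phi y := 2 * c - 2 * t + (1 + t) * t * exp (t * ln y) / y.
Definition chi y := c * (y - 1) ^ 2 - 1 - t * (y - 1) + exp (t * ln y).
Definition dchi y := 2 * c * (y - 1) - t + t * exp (t * ln y) / y.
Definition d2chi y := 2 * c + t * (t - 1) * exp (t * ln y) / (y * y).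

Lemma phi_d y : 0 < y -> is_derive phi y (dphi y).
Proof. intros Hy. unfold phi, dphi. auto_derive. lra. field. lra. Qed.
Lemma dphi_d y : 0 < y -> is_derive dphi y (d2phi y).
Proof. intros Hy. unfold dphi, d2phi. auto_derive. lra. field. lra. Qed.
Lemma chi_d y : 0 < y -> is_derive chi y (dchi y).
Proof. intros Hy. unfold chi, dchi. auto_derive. lra. field. lra. Qed.
Lemma dchi_d y : 0 < y -> is_derive dchi y (d2chi y).
Proof. intros Hy. unfold dchi, d2chi. auto_derive. lra. field. lra. Qed.

Lemma phi1 : phi 1 = 0.  Proof. unfold phi. rewrite ln_1, Rmult_0_r, exp_0. ring. Qed.
Lemma dphi1 : dphi 1 = 0.  Proof. unfold dphi. rewrite ln_1, Rmult_0_r, exp_0. ring. Qed.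
Lemma chi1 : chi 1 = 0.  Proof. unfold chi. rewrite ln_1, Rmult_0_r, exp_0. ring. Qed.
Lemma dchi1 : dchi 1 = 0.  Proof. unfold dchi. rewrite ln_1, Rmult_0_r, exp_0. field. Qed.

Lemma d2phi_a y : 0 < y <= 1 -> 0 <= d2phi y.
Proof. intros Hy. unfold d2phi, c. pose proof (E_ge t y Ht Hy).
 assert (exp (t * ln y) / y >= 1). { apply Rle_ge. apply (Rmult_le_reg_r y); [lra|].
   unfold Rdiv; rewrite Rmult_assoc, Rinv_l by lra. lra. }
 replace ((1 + t) * t * exp (t * ln y) / y) with ((1+t)*t*(exp (t * ln y) / y)) by (field; lra).
 nra. Qed.
Lemma d2phi_b y : 1 <= y -> d2phi y <= 0.
Proof. intros Hy. unfold d2phi, c. pose proof (E_le t y Ht Hy).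
 assert (exp (t * ln y) / y <= 1). { apply (Rmult_le_reg_r y); [lra|].
   unfold Rdiv; rewrite Rmult_assoc, Rinv_l by lra. lra. }
 replace ((1 + t) * t * exp (t * ln y) / y) with ((1+t)*t*(exp (t * ln y) / y)) by (field; lra).
 nra. Qed.
Lemma d2chi_a y : 0 < y <= 1 -> d2chi y <= 0.
Proof. intros Hy. unfold d2chi, c. pose proof (E_ge t y Ht Hy).
 assert (exp (t * ln y) / (y*y) >= 1). { apply Rle_ge. apply (Rmult_le_reg_r (y*y)); [nra|].
   unfold Rdiv; rewrite Rmult_assoc, Rinv_l by nra. nra. }
 replace (t * (t - 1) * exp (t * ln y) / (y*y)) with (t*(t-1)*(exp (t * ln y) / (y*y))) by (field; lra).
 assert (0 <= t*(1-t)) by nra. assert (0 <= t*(1-t)*(exp (t * ln y) / (y*y) - 1)) by nra. nra. Qed.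
Lemma d2chi_b y : 1 <= y -> 0 <= d2chi y.
Proof. intros Hy. unfold d2chi, c. pose proof (E_le t y Ht Hy).
 assert (exp (t * ln y) / (y*y) <= 1). { apply (Rmult_le_reg_r (y*y)); [nra|].
   unfold Rdiv; rewrite Rmult_assoc, Rinv_l by nra. nra. }
 replace (t * (t - 1) * exp (t * ln y) / (y*y)) with (t*(t-1)*(exp (t * ln y) / (y*y))) by (field; lra).
 assert (0 <= t*(1-t)) by nra. assert (0 <= t*(1-t)*(1 - exp (t * ln y) / (y*y))) by nra. nra. Qed.

Lemma phi_ge x : 0 < x <= 1 -> 0 <= phi x.
Proof. intros Hx. apply (G1 phi dphi d2phi x Hx phi1 dphi1).
 - intros; apply phi_d; lra. - intros; apply dphi_d; lra. - intros; apply d2phi_a; lra. Qed.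
Lemma phi_le x : 1 <= x -> phi x <= 0.
Proof. intros Hx. enough (0 <= - phi x) by lra.
 apply (G2 (fun y => - phi y) (fun y => - dphi y) (fun y => - d2phi y) x Hx).
 - rewrite phi1; ring. - rewrite dphi1; ring.
 - intros; apply (is_derive_opp phi); apply phi_d; lra.
 - intros; apply (is_derive_opp dphi); apply dphi_d; lra.
 - intros y Hy; pose proof (d2phi_b y ltac:(lra)); lra. Qed.
Lemma chi_le x : 0 < x <= 1 -> chi x <= 0.
Proof. intros Hx. enough (0 <= - chi x) by lra.
 apply (G1 (fun y => - chi y) (fun y => - dchi y) (fun y => - d2chi y) x Hx).
 - rewrite chi1; ring. - rewrite dchi1; ring.
 - intros; apply (is_derive_opp chi); apply chi_d; lra.
 - intros; apply (is_derive_opp dchi); apply dchi_d; lra.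
 - intros y Hy; pose proof (d2chi_a y ltac:(lra)); lra. Qed.
Lemma chi_ge x : 1 <= x -> 0 <= chi x.
Proof. intros Hx. apply (G2 chi dchi d2chi x Hx chi1 dchi1).
 - intros; apply chi_d; lra. - intros; apply dchi_d; lra. - intros; apply d2chi_b; lra. Qed.

Lemma term_lower m M x : 0 < m -> m <= x <= M -> m <= 1 <= M ->
  t * (1 - t) / 2 * (x - 1) ^ 2 / M <= 1 + t * (x - 1) - exp (t * ln x).
Proof. intros Hm Hx H1. assert (Hc : 0 <= t * (1 - t) / 2) by nra.
 set (K := t * (1 - t) / 2 * (x - 1) ^ 2). assert (HK : 0 <= K) by (unfold K; apply Rmult_le_pos; [lra|apply pow2_ge_0]).
 set (g := 1 + t * (x - 1) - exp (t * ln x)).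
 assert (KM : K / M <= K / x). { unfold Rdiv; apply Rmult_le_compat_l; [lra|]. apply Rinv_le_contravar; lra. }
 destruct (Rle_lt_dec x 1).
 - pose proof (chi_le x ltac:(lra)) as H. unfold chi, c in H.
   assert (K / M <= K). { apply (Rmult_le_reg_r M); [lra|].
     replace (K / M * M) with K by (field; lra). nra. }
   unfold g, K in *; lra.
 - pose proof (phi_le x ltac:(lra)) as H. unfold phi, c in H.
   assert (K / x <= g). { apply (Rmult_le_reg_r x); [lra|].
     replace (K / x * x) with K by (field; lra). unfold K, g. nra. }
   lra. Qed.

Lemma term_upper m M x : 0 < m -> m <= x <= M -> m <= 1 <= M ->
  1 + t * (x - 1) - exp (t * ln x) <= t * (1 - t) / 2 * (x - 1) ^ 2 / m.
Proof. intros Hm Hx H1. assert (Hc : 0 <= t * (1 - t) / 2) by nra.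
 set (K := t * (1 - t) / 2 * (x - 1) ^ 2). assert (HK : 0 <= K) by (unfold K; apply Rmult_le_pos; [lra|apply pow2_ge_0]).
 set (g := 1 + t * (x - 1) - exp (t * ln x)).
 assert (KM : K / x <= K / m). { unfold Rdiv; apply Rmult_le_compat_l; [lra|]. apply Rinv_le_contravar; lra. }
 destruct (Rle_lt_dec x 1).
 - pose proof (phi_ge x ltac:(lra)) as H. unfold phi, c in H.
   assert (g <= K / x). { apply (Rmult_le_reg_r x); [lra|].
     replace (K / x * x) with K by (field; lra). unfold K, g. nra. }
   lra.
 - pose proof (chi_ge x ltac:(lra)) as H. unfold chi, c in H.
   assert (K <= K / m). { apply (Rmult_le_reg_r m); [lra|].
     replace (K / m * m) with K by (field; lra). nra. }
   unfold g, K in *; lra. Qed.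
End T.

Lemma core n p x t St m M : (1 <= n)%nat -> (forall i, (i < n)%nat -> 0 < p i) ->
  (forall i, (i < n)%nat -> 0 < x i) -> sumR n (fun i => p i * x i) = sumR n p ->
  0 <= t <= 1 -> 0 < St -> m = minR1 n x -> M = maxR1 n x ->
  t * (1 - t) / 2 * St * (sumR n (fun i => p i * (x i - 1) ^ 2) / sumR n p) / M
    <= St - St * sumR n (fun i => p i * Rpower (x i) t) / sumR n p
  /\ St - St * sumR n (fun i => p i * Rpower (x i) t) / sumR n p
    <= t * (1 - t) / 2 * St * (sumR n (fun i => p i * (x i - 1) ^ 2) / sumR n p) / m.
Proof.
intros Hn Hp Hx Hsx Ht HSt Hm HM.
assert (HP : 0 < sumR n p) by (apply sumR_pos; auto).
assert (Hm0 : 0 < m) by (subst m; apply minR1_pos; auto).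
assert (Hm1 : m <= 1) by (subst; apply minR1_le1).
assert (HM1 : 1 <= M) by (subst; apply maxR1_ge1).
assert (Hxi : forall i, (i < n)%nat -> m <= x i <= M).
{ intros i Hi; subst; split; [apply minR1_le|apply maxR1_ge]; auto. }
set (G := sumR n (fun i => p i * (1 + t * (x i - 1) - Rpower (x i) t))).
assert (HG : St - St * sumR n (fun i => p i * Rpower (x i) t) / sumR n p = St / sumR n p * G).
{ unfold G. rewrite sumR_lin, Hsx. field. lra. }
rewrite HG.
set (Z := sumR n (fun i => p i * (x i - 1) ^ 2)).
assert (HL : forall K, 0 < K -> t * (1 - t) / 2 * St * (Z / sumR n p) / K =
  St / sumR n p * sumR n (fun i => p i * (t * (1 - t) / 2 * (x i - 1) ^ 2 / K))).
{ intros K HK. rewrite (sumR_ext n (fun i => p i * (t * (1 - t) / 2 * (x i - 1) ^ 2 / K)) (fun i => (t * (1 - t) / 2 / K) * (p i * (x i - 1) ^ 2))).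
  - rewrite sumR_scal. unfold Z. field. lra.
  - intros i Hi. field. lra. }
rewrite !HL by lra.
assert (HSP : 0 <= St / sumR n p) by (unfold Rdiv; apply Rmult_le_pos; [lra| left; apply Rinv_0_lt_compat; lra]).
split; apply Rmult_le_compat_l; auto; apply sumR_le; intros i Hi;
  apply Rmult_le_compat_l; try (left; apply Hp; auto); unfold Rpower.
- apply (term_lower t Ht m M (x i)); auto; lra.
- apply (term_upper t Ht m M (x i)); auto; lra.
Qed.

Lemma Rpower_pos x y : 0 < Rpower x y.
Proof. unfold Rpower; apply exp_pos. Qed.

Theorem mainTheorem2 (n : nat) (a p : nat -> R) (r s : R)
  (hn : (1 <= n)%nat)
  (ha : forall i, (i < n)%nat -> 0 < a i)
  (hp : forall i, (i < n)%nat -> 0 < p i)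
  (hr : 0 < r) (hrs : r <= s) :
  A_const n a p r s / M_const n a p s
    <= Rpower (powMean n a p s) r - Rpower (powMean n a p r) r
  /\ Rpower (powMean n a p s) r - Rpower (powMean n a p r) r
    <= A_const n a p r s / m_const n a p s.
Proof.
set (t := r / s).
assert (Hs : 0 < s) by lra.
assert (Ht : 0 <= t <= 1).
{ unfold t; split. apply Rlt_le, Rdiv_lt_0_compat; lra.
  apply (Rmult_le_reg_r s); [lra|]. replace (r / s * s) with r by (field; lra). lra. }
set (P := sumR n p).
assert (HP : 0 < P) by (apply sumR_pos; auto).
set (T := sumR n (fun i => p i * Rpower (a i) s)).
assert (HT : 0 < T).
{ apply sumR_pos; auto. intros i Hi. apply Rmult_lt_0_compat; [auto|apply Rpower_pos]. }
set (S := T / P).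
assert (HS : 0 < S) by (apply Rdiv_lt_0_compat; auto).
assert (HMs : Rpower (powMean n a p s) s = S).
{ unfold powMean. rewrite Rpower_mult. replace (1 / s * s) with 1 by (field; lra).
  apply Rpower_1; auto. }
assert (HMsr : Rpower (powMean n a p s) r = Rpower S t).
{ unfold powMean. rewrite Rpower_mult. f_equal. unfold t; field; lra. }
assert (Har : forall i, (i < n)%nat -> Rpower (a i) r =
   Rpower S t * Rpower (Rpower (a i) s / Rpower (powMean n a p s) s) t).
{ intros i Hi. rewrite HMs. rewrite Rpower_mult_distr.
  - replace (S * (Rpower (a i) s / S)) with (Rpower (a i) s) by (field; lra).
    rewrite Rpower_mult. f_equal. unfold t; field; lra.
  - auto.
  - apply Rdiv_lt_0_compat; [apply Rpower_pos|auto]. }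
assert (HQ : Rpower (powMean n a p r) r =
  Rpower S t * sumR n (fun i => p i * Rpower (Rpower (a i) s / Rpower (powMean n a p s) s) t) / sumR n p).
{ unfold powMean. rewrite Rpower_mult. replace (1 / r * r) with 1 by (field; lra).
  rewrite Rpower_1.
  - rewrite (sumR_ext n _ (fun i => Rpower S t * (p i * Rpower (Rpower (a i) s / Rpower (powMean n a p s) s) t))).
    + rewrite sumR_scal. reflexivity.
    + intros i Hi. rewrite Har by auto. ring.
  - apply Rdiv_lt_0_compat; auto. apply sumR_pos; auto.
    intros i Hi. apply Rmult_lt_0_compat; [auto|apply Rpower_pos]. }
unfold A_const, M_const, m_const.
rewrite HQ, HMsr.
replace (r * (s - r) / (2 * s ^ 2)) with (t * (1 - t) / 2) by (unfold t; field; lra).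
apply (core n p (fun i => Rpower (a i) s / Rpower (powMean n a p s) s)); auto.
- intros i Hi. apply Rdiv_lt_0_compat; [apply Rpower_pos| rewrite HMs; auto].
- rewrite HMs. rewrite (sumR_ext n (fun i => p i * (Rpower (a i) s / S)) (fun i => / S * (p i * Rpower (a i) s))).
  + rewrite sumR_scal. fold T. unfold S, P. field. repeat split; try lra; fold P; lra.
  + intros i Hi. field. lra.
- apply Rpower_pos.
Qed.
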